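(* For every positive integer $m$ and every complex number $\alpha \neq 0$, $$\sum_{k=1}^m \left[ {m \atop k} \right] k^\alpha = \sum_{j=1}^m j!\, S(\alpha, j) \left[ {m+1 \atop j+1} \right].$$
   Context: For a complex number $\alpha \neq 0$ and a positive integer $k$, the Stirling function of the second kind is $$S(\alpha, k) = \frac{1}{k!} \sum_{j=1}^k (-1)^{k-j} \binom{k}{j} j^\alpha,$$ where for a positive integer $j$, $j^\alpha = e^{\alpha \ln j}$ with $\ln j$ the real logarithm. For nonnegative integers $n,k$, $\left[ {n \atop k} \right]$ denotes the unsigned Stirling number of the first kind, i.e. the number of permutations of an $n$-element set with exactly $k$ cycles; equivalently $x(x+1)\cdots(x+n-1) = \sum_{k=0}^n \left[ {n \atop k} \right] x^k$. *)

(* Defs.v *)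
From mathcomp Require Import all_boot all_fingroup.
From Stdlib Require Import Reals.

(* unsigned Stirling number of the first kind: number of permutations of an
   n-element set with exactly k cycles (cycles = orbits, fixed points included) *)
Definition stirling1 (n k : nat) : nat :=
  #|[set s : {perm 'I_n} | #|porbits s| == k]|.

Open Scope R_scope.

Record Cx : Type := mkC { Re : R ; Im : R }.

Definition C0 : Cx := mkC 0 0.
Definition Cadd (z w : Cx) : Cx := mkC (Re z + Re w) (Im z + Im w).
Definition Cmul (z w : Cx) : Cx :=
  mkC (Re z * Re w - Im z * Im w) (Re z * Im w + Im z * Re w).
Definition Cscal (r : R) (z : Cx) : Cx := mkC (r * Re z) (r * Im z).

(* sum_{i=1}^{n} f i *)
Fixpoint Csum1 (n : nat) (f : nat -> Cx) : Cx :=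
  match n with
  | O => C0
  | S n' => Cadd (Csum1 n' f) (f n)
  end.

(* j^alpha := e^{alpha ln j} for a positive integer j, ln the real logarithm:
   e^{(a+ib) l} = e^{a l} (cos (b l) + i sin (b l)) *)
Definition Cnatpow (j : nat) (alpha : Cx) : Cx :=
  let l := ln (INR j) in
  mkC (exp (Re alpha * l) * cos (Im alpha * l))
      (exp (Re alpha * l) * sin (Im alpha * l)).

Definition stirling2f (alpha : Cx) (k : nat) : Cx :=
  Cscal (/ INR (k`!)%nat)
    (Csum1 k (fun j => Cscal (pow (-1) (k - j)%nat * INR 'C(k, j)) (Cnatpow j alpha))).

(* Main.v *)
Require Import Defs.
From mathcomp Require Import all_boot all_fingroup.
Set Implicit Arguments. Unset Strict Implicit.

Section Comb.
Local Open Scope group_scope.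

Lemma expg_fix (T : finType) (s : {perm T}) x i : s x = x -> (s ^+ i) x = x.
Proof. move=> sx; elim: i => [|i IH]; first by rewrite expg0 perm1.
by rewrite expgSr permM IH sx. Qed.

Lemma porbit_fix (T : finType) (s : {perm T}) x : s x = x -> porbit s x = [set x].
Proof. move=> sx; apply/setP=> y; rewrite inE; apply/porbitP/eqP.
  by case=> i ->; rewrite expg_fix.
by move=> ->; exists 0%N; rewrite expg0 perm1. Qed.

Variable n : nat.
Let x : 'I_n.+1 := ord_max.

Lemma lift_expg (s : 'S_n) i k :
  (lift_perm x x s ^+ i) (lift x k) = lift x ((s ^+ i) k).
Proof. elim: i => [|i IH]; first by rewrite !expg0 !perm1.
by rewrite !expgSr !permM IH lift_perm_lift. Qed.

Lemma porbit_lift (s : 'S_n) k :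
  porbit (lift_perm x x s) (lift x k) = [set lift x z | z in porbit s k].
Proof. apply/setP=> y; apply/porbitP/imsetP.
  by case=> i ->; exists ((s ^+ i) k); [apply: mem_porbit|rewrite lift_expg].
by case=> z /porbitP [i ->] ->; exists i; rewrite lift_expg. Qed.

Lemma porbits_lift (s : 'S_n) :
  #|porbits (lift_perm x x s)| = #|porbits s|.+1.
Proof.
have Lx : lift_perm x x s x = x by rewrite lift_perm_id.
have -> : porbits (lift_perm x x s) =
   [set x] |: [set [set lift x z | z in A] | A : {set 'I_n} in porbits s].
  apply/setP=> B; rewrite !inE; apply/imsetP/idP.
    case=> y _ ->; case: (unliftP x y) => [k|] ->.
      by rewrite porbit_lift; apply/orP; right; apply/imsetP;
        exists (porbit s k) => //; apply: imset_f.
    by rewrite porbit_fix // eqxx.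
  case/orP=> [/eqP ->|/imsetP [A /imsetP [k _ ->] ->]].
    by exists x => //; rewrite porbit_fix.
  by exists (lift x k) => //; rewrite porbit_lift.
rewrite cardsU1 card_imset; last by apply: imset_inj; apply: lift_inj.
suff -> : [set x] \notin [set [set lift x z | z in A] | A : {set 'I_n} in porbits s] by [].
apply/imsetP=> [[A _ eA]].
have : x \in [set x] by rewrite inE.
by rewrite eA => /imsetP [z _ E]; move: (neq_lift x z); rewrite -E eqxx.
Qed.

Lemma lift_perm_inj : injective (@lift_perm n x x).
Proof. move=> s t E; apply/permP=> k; apply: (@lift_inj _ x).
by rewrite -!(@lift_perm_lift _ x x) E. Qed.

Lemma lift_perm_onto (s : 'S_n.+1) : s x = x -> exists t, s = lift_perm x x t.
Proof.
move=> sx.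
have H k : s (lift x k) != x.
  apply/eqP => E; have E2 : s (lift x k) = s x by rewrite E sx.
  by move: (neq_lift x k); rewrite (perm_inj E2) eqxx.
pose f k := odflt k (unlift x (s (lift x k))).
have Hf k : lift x (f k) = s (lift x k).
  rewrite /f; case: (unliftP x (s (lift x k))) => [j|] E; first by rewrite E.
  by move: (H k); rewrite E eqxx.
have finj : injective f.
  by move=> a b E; apply: (@lift_inj _ x); apply: (@perm_inj _ s); rewrite -!Hf E.
exists (perm finj); apply/permP=> y; case: (unliftP x y) => [k|] ->.
  by rewrite lift_perm_lift permE Hf.
by rewrite lift_perm_id.
Qed.

Lemma card_fixed k :
  #|[set s : 'S_n.+1 | (#|porbits s| == k) && (s x == x)]| =
  #|[set s : 'S_n | #|porbits s|.+1 == k]|.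
Proof.
rewrite -(card_imset _ lift_perm_inj); apply: eq_card => s; rewrite !inE.
apply/andP/imsetP.
  case=> /eqP <- /eqP sx; case: (lift_perm_onto sx) => t ->.
  by exists t; rewrite // inE porbits_lift.
by case=> t; rewrite inE => /eqP <- ->; rewrite porbits_lift lift_perm_id.
Qed.

Lemma card_nonfixed k :
  #|[set s : 'S_n.+1 | (#|porbits s| == k) && (s x != x)]| =
  (#|[set s : 'S_n.+1 | (#|porbits s| == k.+1) && (s x == x)]| * n)%N.
Proof.
have cB : #|[set~ x]| = n by rewrite cardsC1 card_ord.
set A := [set s : 'S_n.+1 | (#|porbits s| == k.+1) && (s x == x)].
rewrite -[X in (_ * X)%N]cB -cardsX.
pose phi (p : 'S_n.+1 * 'I_n.+1) := tperm x p.2 * p.1.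
rewrite -(@card_in_imset _ _ phi).
  apply: eq_card => s; rewrite !inE; apply/andP/imsetP.
    case=> /eqP ck sx.
    pose y := s^-1 x.
    have yx : y != x by apply: contra sx => /eqP E; rewrite -{1}E permKV.
    exists (tperm x y * s, y).
      rewrite !inE /= yx andbT; apply/andP; split; last first.
        by rewrite permM tpermL permKV.
      have := porbits_mul_tperm s x y; rewrite /= eq_sym yx.
      have -> : x \in porbit s y.
        by rewrite -{1}(permKV s x) -/y; have := mem_porbit s 1 y; rewrite expg1.
      by rewrite addn0 ck addn1 => ->.
    by rewrite /phi /= mulgA tperm2 mul1g.
  case=> [[s1 y]]; rewrite !inE /= => /andP [/andP [/eqP c1 /eqP s1x] yx] ->.
  rewrite /phi /=; split.
    have := porbits_mul_tperm s1 x y; rewrite /= eq_sym yx porbit_sym (porbit_fix s1x) in_set1 yx.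
    by rewrite c1 addn1 /= => E; apply/eqP; apply/eqP; rewrite -(eqn_add2r 2) E addn2.
  rewrite /phi /= permM tpermL; apply/eqP => E.
  by move: yx; rewrite -s1x in E; rewrite (perm_inj E) eqxx.
case=> [s1 y] [t1 z]; rewrite !inE /= => /andP [/andP [_ /eqP s1x] yx]
  /andP [/andP [_ /eqP t1x] zx]; rewrite /phi /= => E.
have ey : y = z.
  have : (tperm x y * s1) y = (tperm x z * t1) y by rewrite E.
  rewrite !permM tpermR s1x -{1}t1x => /perm_inj.
  case: tpermP => [yx'|yz|_ _ h]; [by rewrite yx' eqxx in yx | by [] |].
  by rewrite h eqxx in yx.
by subst z; congr pair; apply: (mulgI (tperm x y)).
Qed.

End Comb.

Lemma stirling1_0 k : stirling1 0 k = (k == 0%N).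
Proof.
rewrite /stirling1.
have P (s : 'S_0) : #|porbits s| = 0%N.
  by apply/eqP; rewrite cards_eq0 /porbits; apply/eqP/setP => A;
     rewrite inE; apply/imsetP => [[[]]].
case: k => [|k].
  rewrite (_ : [set _ | _] = setT); first by rewrite cardsT card_Sn.
  by apply/setP => s; rewrite !inE P.
rewrite (_ : [set _ | _] = set0) ?cards0 //.
by apply/setP => s; rewrite !inE P.
Qed.

Lemma stirling1_S n k :
  stirling1 n.+1 k = ((if k is k'.+1 then stirling1 n k' else 0) + n * stirling1 n k)%N.
Proof.
rewrite /stirling1 -(cardsID [set s : 'S_n.+1 | s ord_max == ord_max]).
have -> : #|[set s : 'S_n.+1 | #|porbits s| == k] :&: [set s : 'S_n.+1 | s ord_max == ord_max]|
   = #|[set s : 'S_n.+1 | (#|porbits s| == k) && (s ord_max == ord_max)]|.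
  by apply: eq_card => s; rewrite !inE.
have -> : #|[set s : 'S_n.+1 | #|porbits s| == k] :\: [set s : 'S_n.+1 | s ord_max == ord_max]|
   = #|[set s : 'S_n.+1 | (#|porbits s| == k) && (s ord_max != ord_max)]|.
  by apply: eq_card => s; rewrite !inE andbC.
rewrite card_fixed card_nonfixed card_fixed mulnC; congr (_ + _)%N.
case: k => [|k].
  by apply/eqP; rewrite cards_eq0; apply/eqP/setP => s; rewrite !inE.
by apply: eq_card => s; rewrite !inE eqSS.
Qed.

Fixpoint cS (n k : nat) : nat :=
  match n with
  | O => match k with O => 1%N | _ => 0%N end
  | S n' => Nat.add (match k with O => 0%N | S k' => cS n' k' end) (Nat.mul n' (cS n' k))
  end.

Lemma stirling1_cS n k : stirling1 n k = cS n k.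
Proof.
elim: n k => [|n IH] k; first by rewrite stirling1_0; case: k.
rewrite stirling1_S /=; case: k => [|k]; by rewrite !IH.
Qed.

Unset Implicit Arguments.
Set Strict Implicit.

From Stdlib Require Import Reals Lra Lia.
Open Scope R_scope.

Fixpoint rs (n : nat) (f : nat -> R) : R :=
  match n with O => 0 | S n' => rs n' f + f n' end.

Lemma rs_ext n f g : (forall i, (i < n)%coq_nat -> f i = g i) -> rs n f = rs n g.
Proof. induction n as [|n IH]; intros H; simpl; auto.
rewrite IH. rewrite H. reflexivity. lia. intros; apply H; lia. Qed.

Lemma rs_add n f g : rs n (fun i => f i + g i) = rs n f + rs n g.
Proof. induction n; simpl; [lra|rewrite IHn; lra]. Qed.

Lemma rs_scal n c f : rs n (fun i => c * f i) = c * rs n f.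
Proof. induction n; simpl; [lra|rewrite IHn; lra]. Qed.

Lemma rs_shift n f : rs (S n) f = f O + rs n (fun i => f (S i)).
Proof. induction n; simpl in *; [lra|rewrite IHn; lra]. Qed.

Lemma rs_swap n m h : rs n (fun i => rs m (fun j => h i j)) = rs m (fun j => rs n (fun i => h i j)).
Proof. induction n; simpl.
- induction m; simpl; [lra|rewrite -IHm; lra].
- rewrite IHn -rs_add; reflexivity. Qed.

Lemma rs_tail n m f : (forall i, (n <= i)%coq_nat -> (i < m)%coq_nat -> f i = 0) ->
  (n <= m)%coq_nat -> rs n f = rs m f.
Proof. intros H Hnm; induction Hnm; simpl; auto.
rewrite (H m); [|lia|lia]. rewrite IHHnm; [lra|]. intros; apply H; lia. Qed.

Lemma Re_Csum1 n f : Re (Csum1 n f) = rs n (fun i => Re (f (S i))).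
Proof. induction n; simpl; [reflexivity|rewrite IHn; reflexivity]. Qed.
Lemma Im_Csum1 n f : Im (Csum1 n f) = rs n (fun i => Im (f (S i))).
Proof. induction n; simpl; [reflexivity|rewrite IHn; reflexivity]. Qed.

Lemma cS_big n k : (n < k)%coq_nat -> cS n k = O.
Proof. revert k; induction n; intros [|k] H; simpl; try lia; try reflexivity.
rewrite (IHn k); try lia; rewrite (IHn (S k)); lia. Qed.

Lemma cS_S0 n : cS (S n) O = O.
Proof. induction n; simpl in *; [reflexivity|rewrite IHn; lia]. Qed.

Lemma binS' j i : 'C(S j, S i) = Nat.add 'C(j, S i) 'C(j, i).
Proof. by rewrite binS. Qed.
Lemma bin_small' j i : (j < i)%coq_nat -> 'C(j, i) = O.
Proof. by move=> /ltP; apply: bin_small. Qed.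

Lemma key m : forall i,
  rs (S m) (fun j => (-1) ^ (j + i) * INR 'C(j, i) * INR (cS (S m) (S j))) = INR (cS m i).
Proof.
induction m as [|m IH]; intros i.
- simpl. destruct i; simpl; lra.
- rewrite (rs_ext _ _ (fun j => (-1) ^ (j + i) * INR 'C(j, i) * INR (cS (S m) j) +
     INR (S m) * ((-1) ^ (j + i) * INR 'C(j, i) * INR (cS (S m) (S j))))).
  2:{ intros j _. change (cS (S (S m)) (S j)) with (Nat.add (cS (S m) j) (Nat.mul (S m) (cS (S m) (S j)))).
      rewrite plus_INR mult_INR. ring. }
  rewrite rs_add rs_scal.
  change (rs (S (S m)) (fun j => (-1) ^ (j + i) * INR 'C(j, i) * INR (cS (S m) (S j))))
   with (rs (S m) (fun j => (-1) ^ (j + i) * INR 'C(j, i) * INR (cS (S m) (S j)))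
      + (-1) ^ (S m + i) * INR 'C(S m, i) * INR (cS (S m) (S (S m)))).
  rewrite IH (cS_big (S m) (S (S m))); last lia.
  rewrite rs_shift cS_S0.
  destruct i as [|i].
  + rewrite (rs_ext _ _ (fun j => -1 * ((-1) ^ (j + 0) * INR 'C(j, 0) * INR (cS (S m) (S j))))).
    2:{ intros j _. rewrite !bin0. simpl. ring. }
    rewrite rs_scal IH. change (cS (S m) 0) with (Nat.add 0 (Nat.mul m (cS m 0))).
    rewrite plus_INR mult_INR S_INR. simpl. ring.
  + rewrite (rs_ext _ _ (fun j => -1 * ((-1) ^ (j + S i) * INR 'C(j, S i) * INR (cS (S m) (S j)))
         + ((-1) ^ (j + i) * INR 'C(j, i) * INR (cS (S m) (S j))))).
    2:{ intros j _. rewrite binS' plus_INR.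
        rewrite !addSn !addnS /=. ring. }
    rewrite rs_add rs_scal !IH. change (cS (S m) (S i)) with (Nat.add (cS m i) (Nat.mul m (cS m (S i)))).
    rewrite plus_INR mult_INR S_INR bin0n. simpl. ring.
Qed.

Lemma sign_sub (i j : nat) : is_true (leq i j) -> (-1)^(j - i) = (-1)^(j + i).
Proof.
move=> H. rewrite -{2}(subnK H) -addnA. rewrite -!plusE pow_add pow_add -Rpow_mult_distr.
replace (-1 * -1) with 1 by ring. rewrite pow1. ring.
Qed.

Lemma INR_fact_neq0 n : INR (n`!) <> 0.
Proof. apply not_0_INR. move=> H. have := fact_gt0 n. by rewrite H. Qed.

Lemma main_R m F :
 rs m (fun k => INR (cS m (S k)) * F (S k)) =
 rs m (fun j => INR ((S j)`!) * INR (cS (S m) (S (S j))) *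
    (/ INR ((S j)`!) * rs (S j) (fun i => (-1)^(S j - S i) * INR 'C(S j, S i) * F (S i)))).
Proof.
symmetry. rewrite (rs_ext m (fun j => _ * _) (fun j => rs m (fun i =>
   F (S i) * (INR (cS (S m) (S (S j))) * ((-1)^(S j + S i) * INR 'C(S j, S i)))))).
2:{ intros j Hj.
    have E : INR ((S j)`!) * INR (cS (S m) (S (S j))) *
      (/ INR ((S j)`!) * rs (S j) (fun i => (-1)^(S j - S i) * INR 'C(S j, S i) * F (S i)))
      = INR (cS (S m) (S (S j))) * rs (S j) (fun i => (-1)^(S j - S i) * INR 'C(S j, S i) * F (S i)).
    { field. apply INR_fact_neq0. }
    rewrite E -rs_scal.
    rewrite (rs_ext (S j) _ (fun i =>
      F (S i) * (INR (cS (S m) (S (S j))) * ((-1)^(S j + S i) * INR 'C(S j, S i))))).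
    2:{ intros i Hi. rewrite sign_sub. ring. apply/leP; lia. }
    apply rs_tail.
    - intros i H1 H2. rewrite bin_small'; [|lia]. simpl. ring.
    - lia. }
rewrite rs_swap. apply rs_ext. intros i Hi.
rewrite rs_scal.
have K := key m (S i). rewrite rs_shift in K.
rewrite (_ : INR 'C(0, S i) = 0) in K; last by rewrite bin0n.
rewrite Rmult_0_r Rmult_0_l Rplus_0_l in K.
rewrite -K.
have -> : rs m (fun j => INR (cS (S m) (S (S j))) * ((-1) ^ (S j + S i) * INR 'C(S j, S i)))
  = rs m (fun j => (-1) ^ (S j + S i) * INR 'C(S j, S i) * INR (cS (S m) (S (S j)))).
{ apply rs_ext; intros; ring. }
ring.
Qed.

Lemma Cx_eq z w : Re z = Re w -> Im z = Im w -> z = w.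
Proof. destruct z, w; simpl; intros -> ->; reflexivity. Qed.

Theorem proposition3 (m : nat) (alpha : Cx) :
  (0 < m)%nat -> alpha <> C0 ->
  Csum1 m (fun k => Cscal (INR (stirling1 m k)) (Cnatpow k alpha)) =
  Csum1 m (fun j => Cscal (INR (j`!)%nat * INR (stirling1 m.+1 j.+1))
                          (stirling2f alpha j)).
Proof.
intros _ _. apply Cx_eq.
- rewrite !Re_Csum1.
  rewrite (rs_ext m _ (fun k => INR (cS m (S k)) * Re (Cnatpow (S k) alpha)));
    last by intros; cbn [Re Cscal]; rewrite stirling1_cS.
  rewrite (main_R m (fun k => Re (Cnatpow k alpha))). apply rs_ext; intros j _.
  rewrite /stirling2f. cbn [Re Cscal]. rewrite Re_Csum1 stirling1_cS. apply Rmult_eq_compat_l, Rmult_eq_compat_l.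
  apply rs_ext; intros i _. cbn [Re Cscal]. ring.
- rewrite !Im_Csum1.
  rewrite (rs_ext m _ (fun k => INR (cS m (S k)) * Im (Cnatpow (S k) alpha)));
    last by intros; cbn [Im Cscal]; rewrite stirling1_cS.
  rewrite (main_R m (fun k => Im (Cnatpow k alpha))). apply rs_ext; intros j _.
  rewrite /stirling2f. cbn [Im Cscal]. rewrite Im_Csum1 stirling1_cS. apply Rmult_eq_compat_l, Rmult_eq_compat_l.
  apply rs_ext; intros i _. cbn [Im Cscal]. ring.
Qed.
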